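(* Let $G$ be a group generated by a finite conjugacy class $X$, let $m$ be the order of the conjugation action of any $x\in X$ on $X$, let $<$ be a total order on $X$, and let $z$ be the maximal element of $(X,<)$. Then for all $n\ge 0$, every element of $X^n=\{y_1y_2\cdots y_n: y_i\in X\}\subseteq G$ can be written as $x_1^{n_1}x_2^{n_2}\cdots x_k^{n_k}z^l$ with $k,l\ge0$, $n_1+\cdots+n_k+l=n$, $x_1<x_2<\cdots<x_k<z$ in $X$, and $1\le n_i\le m-1$ for all $1\le i\le k$.
   Context: The conjugation action of $x\in X$ on $X$ is the permutation $y\mapsto xyx^{-1}$ of $X$; its order $m$ is the same for all $x\in X$ since $X$ is a conjugacy class. *)

(* Defs.v *)
From mathcomp Require Import all_boot.
Set Implicit Arguments. Unset Strict Implicit. Unset Printing Implicit Defensive.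
Local Open Scope group_scope.

(* X (given as a duplicate-free list) is a conjugacy class of G:
   X = { x0 ^ g | g in G } for some x0 (x ^ g = g^-1 * x * g). *)
Definition is_conj_class (G : groupType) (X : seq G) : Prop :=
  exists x0 : G, forall y : G, y \in X <-> exists g : G, y = x0 ^ g.

Definition generates (G : groupType) (X : seq G) : Prop :=
  forall S : {pred G}, group_closed S -> {subset X <= S} -> forall g : G, g \in S.

Definition conj_iter (G : groupType) (x : G) (k : nat) (y : G) : G :=
  x ^+ k * y * (x ^+ k)^-1.

Definition conj_action_order (G : groupType) (X : seq G) (x : G) (m : nat) : Prop :=
  [/\ 0 < m,
      (forall y, y \in X -> conj_iter x m y = y) &
      (forall k, 0 < k < m -> exists2 y, y \in X & conj_iter x k y != y)].

Definition strict_total_order_on (G : eqType) (X : seq G) (lt : rel G) : Prop :=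
  [/\ (forall x, x \in X -> ~~ lt x x),
      (forall x y z, x \in X -> y \in X -> z \in X -> lt x y -> lt y z -> lt x z) &
      (forall x y, x \in X -> y \in X -> x != y -> lt x y || lt y x)].

Definition prodl (G : groupType) (s : seq G) : G := foldr (fun a b => a * b) 1 s.

Definition prod_pows (G : groupType) (xs : seq G) (ns : seq nat) : G :=
  prodl [seq p.1 ^+ p.2 | p <- zip xs ns].

(* Main.v *)
Require Import Defs.
From mathcomp Require Import all_boot.
From mathcomp Require Import zify.
Set Implicit Arguments. Unset Strict Implicit. Unset Printing Implicit Defensive.
Local Open Scope group_scope.

Lemma central_pow (G : groupType) (X : seq G) (m : nat) :
  generates X -> (forall x, x \in X -> conj_action_order X x m) ->
  forall x, x \in X -> forall g : G, commute g (x ^+ m).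
Proof.
move=> gen hm x xX.
set c := x ^+ m.
have hc : forall y, y \in X -> commute y c.
  move=> y yX; case: (hm x xX) => _ H _; have := H y yX.
  rewrite /conj_iter -/c => E; rewrite /commute.
  by rewrite -{1}E mulgVK.
pose S : {pred G} := [pred g | g * c == c * g].
have Scl : group_closed S.
  split; first by rewrite inE mul1g mulg1.
  move=> u v; rewrite !inE => /eqP Hu /eqP Hv; apply/eqP.
  apply: commute_sym; apply: commuteM; first exact: commute_sym.
  by apply: commuteV; apply: commute_sym.
move=> g; have := gen S Scl.
have sub : {subset X <= S} by move=> y yX; rewrite inE; apply/eqP; exact: hc.
by move=> /(_ sub g); rewrite inE => /eqP.
Qed.

Lemma conj_in (G : groupType) (X : seq G) :
  is_conj_class X -> forall y s, y \in X -> y ^ s \in X.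
Proof.
move=> [x0 H] y s /H [g ->]; apply/H; exists (g * s); by rewrite conjgM.
Qed.

Lemma pow_eq (G : groupType) (X : seq G) (m : nat) :
  is_conj_class X -> (forall x, x \in X -> forall g : G, commute g (x ^+ m)) ->
  forall x z, x \in X -> z \in X -> z ^+ m = x ^+ m.
Proof.
move=> [x0 H] hc x z xX zX.
have [a ea] := (H x).1 xX; have [b eb] := (H z).1 zX.
have -> : z = x ^ (a^-1 * b) by rewrite eb ea -conjgM mulVKg.
by rewrite -conjXg conjgE -(hc x xX (a^-1 * b)) mulKg.
Qed.

Definition lel (G : eqType) (lt : rel G) : rel G := fun a b => (a == b) || lt a b.

Lemma lel_trans (G : eqType) (X : seq G) lt : strict_total_order_on X lt ->
  forall a b c, a \in X -> b \in X -> c \in X -> lel lt a b -> lel lt b c -> lel lt a c.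
Proof.
move=> [irr tr tot] a b c aX bX cX; rewrite /lel.
case/orP=> [/eqP->|hab] //; case/orP=> [/eqP<-|hbc]; first by rewrite hab orbT.
by rewrite (tr a b c) ?orbT.
Qed.

Lemma path_all (G : eqType) (X : seq G) lt : strict_total_order_on X lt ->
  forall s y, all (mem X) (y :: s) -> path (lel lt) y s -> all (lel lt y) s.
Proof.
move=> ho; elim=> [|a s IH] y //= /and3P[yX aX sX] /andP[hya hp].
rewrite hya /=; have := IH a; rewrite /= aX sX => /(_ isT hp) /allP ha.
apply/allP=> b bs; apply: (lel_trans ho yX aX) => //; last exact: ha.
exact: (allP sX).
Qed.

Lemma count_lt (G : eqType) (X : seq G) lt : strict_total_order_on X lt ->
  forall s y, s \in X -> y \in X -> lt s y ->
  (count (fun x => lt x s) X < count (fun x => lt x y) X)%N.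
Proof.
move=> [irr tr tot] s y sX yX hsy.
rewrite -(size_filter (fun x => lt x y)) -(count_predC (fun x => lt x s)) !count_filter.
have -> : count (predI (fun x => lt x s) (fun x => lt x y)) X = count (fun x => lt x s) X.
  apply: eq_in_count => x xX /=; case h: (lt x s) => //=.
  exact: (tr x s y).
rewrite -[X in (X < _)%N]addn0 ltn_add2l lt0n -lt0n -has_count.
apply/hasP; exists s => //; rewrite /= irr //.
Qed.

Lemma sort_ex (G : groupType) (X : seq G) lt :
  is_conj_class X -> strict_total_order_on X lt ->
  forall n ys, size ys = n -> all (mem X) ys ->
  exists2 ts, [/\ size ts = n, all (mem X) ts & sorted (lel lt) ts] & prodl ts = prodl ys.
Proof.
move=> hcc ho; have [irr tr tot] := ho.
elim=> [|n IH] [|y ys] //=; first by move=> _ _; exists [::].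
move=> [sz] /andP[yX ysX].
have [t [st tX tsort] et] := IH ys sz ysX.
rewrite -et; clear ys sz ysX et.
suff ins : forall k y, (count (fun x => lt x y) X < k)%N -> y \in X ->
  forall t, size t = n -> all (mem X) t -> sorted (lel lt) t ->
  exists2 u, [/\ size u = n.+1, all (mem X) u & sorted (lel lt) u] & prodl u = y * prodl t.
  exact: (ins (count (fun x => lt x y) X).+1).
elim=> [|k IHk] y0 //= hk y0X [|s t'] /=.
  by move=> <- _ _; exists [:: y0] => //; split => //=; rewrite y0X.
move=> st' /andP[sX t'X] hp.
case hle: (lel lt y0 s).
  exists [:: y0, s & t'] => //; split => //=; first by rewrite st'.
    by rewrite y0X sX t'X.
  by rewrite hle hp.
have hsy : lt s y0.
  move: hle; rewrite /lel; case/norP => hne hnl.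
  by have := tot y0 s y0X sX hne; rewrite (negbTE hnl).
have y'X : y0 ^ s \in X by exact: conj_in.
have h1 : size (y0 ^ s :: t') = n by rewrite /= st'.
have h2 : all (mem X) (y0 ^ s :: t') by rewrite /= y'X t'X.
have [w [sw wX wsort] ew] := IH _ h1 h2.
have hk' : (count (fun x => lt x s) X < k)%N.
  by apply: leq_trans (count_lt ho sX y0X hsy) _; rewrite -ltnS.
have [u hu eu] := IHk s hk' sX w sw wX wsort.
exists u => //; rewrite eu ew /= conjgE !mulgA mulgV mul1g.
by rewrite -!mulgA.
Qed.

Lemma nf_ex (G : groupType) (X : seq G) (m : nat) lt z :
  strict_total_order_on X lt -> z \in X -> (forall x, x \in X -> x != z -> lt x z) ->
  (forall x, x \in X -> forall g : G, commute g (x ^+ m)) ->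
  (forall x, x \in X -> z ^+ m = x ^+ m) -> (0 < m)%N ->
  forall ts, all (mem X) ts -> sorted (lel lt) ts ->
  exists xs ns l,
    [/\ size xs = size ns, all (mem X) xs, sorted lt (rcons xs z),
        {subset xs <= ts} & all (fun x => lt x z) xs] /\
    [/\ all (fun k => (1 <= k <= m - 1)%N) ns, (sumn ns + l = size ts)%N &
        prodl ts = prod_pows xs ns * z ^+ l].
Proof.
move=> ho zX zmax hc hpow m0; have [irr tr tot] := ho.
have m2 : forall y, y \in X -> y != z -> (1 <= m - 1)%N.
  move=> y yX; case: m hc hpow m0 => [|[|m']] // hc hpow _.
  by have := hpow y yX; rewrite !expg1 => ->; rewrite eqxx.
elim=> [|y ts IH] /=.
  by move=> _ _; exists [::], [::], 0; split; split => //=; rewrite mul1g.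
move=> /andP[yX tsX] hp.
have hall := path_all ho (s:=ts) (y:=y); rewrite /= yX tsX in hall.
have {}hall := allP (hall isT hp).
have [xs [ns [l [[sz xsX xsort xsub xslt] [nsr nsum ep]]]]] :=
  IH tsX (path_sorted hp).
rewrite ep; clear ep.
case: (eqVneq y z) => [eyz|nyz].
  subst y; case: xs sz xsX xsort xsub xslt => [|x xs'] sz xsX xsort xsub xslt.
    case: ns sz nsr nsum => // _ _ nsum.
    exists [::], [::], l.+1; split; split => //=.
      by move: nsum => /= nsum; clear -nsum; lia.
    by rewrite /= !mul1g expgS.
  have xts : x \in ts by apply: xsub; rewrite inE eqxx.
  have xX : x \in X by exact: (allP tsX).
  have lxz : lt x z by move: xslt => /= /andP[].
  case/orP: (hall x xts) => [/eqP exz|lzx].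
    by move: lxz; rewrite -exz (negbTE (irr z zX)).
  by have := tr x z x xX zX xX lxz lzx; rewrite (negbTE (irr x xX)).
have lyz : lt y z by exact: zmax.
case: xs sz xsX xsort xsub xslt => [|x xs'] sz xsX xsort xsub xslt.
  case: ns sz nsr nsum => // _ _ nsum.
  exists [:: y], [:: 1%N], l; split; split => //=.
  - by rewrite yX.
  - by rewrite lyz.
  - by move=> w; rewrite !inE => ->.
  - by rewrite lyz.
  - by rewrite (m2 y yX nyz).
  - by move: nsum => /= nsum; clear -nsum; lia.
  - by rewrite /prod_pows /prodl /= mul1g mulg1.
case: ns sz nsr nsum => [|e ns'] // [sz] /andP[er nsr] nsum.
have xts : x \in ts by apply: xsub; rewrite inE eqxx.
have xX : x \in X by exact: (allP tsX).
case: (eqVneq y x) => [eyx|nyx].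
  subst y.
  have [elt|ege] := ltnP e.+1 m.
    exists (x :: xs'), (e.+1 :: ns'), l; split; split => //.
    - by rewrite /= sz.
    - by move=> w /xsub; rewrite inE => ->; rewrite orbT.
    - by apply/andP; split => //; case: (m) elt => // n; rewrite ltnS subn1 /= => ->.
    - by move: nsum => /= nsum; clear -nsum; lia.
    - by rewrite /prod_pows /prodl /= expgS !mulgA.
  have em : e.+1 = m by move: er ege m0; clear; lia.
  exists xs', ns', (m + l)%N; split; split => //.
  - by move: xsX => /= /andP[].
  - by move: xsort => /= /path_sorted.
  - by move=> w ww; have := xsub w; rewrite !inE ww orbT => /(_ isT) ->; rewrite orbT.
  - by move: xslt => /= /andP[].
  - by move: nsum => /= nsum; clear -nsum em; lia.
  rewrite /prod_pows /prodl /= !mulgA -expgS em expgnDr (hpow x xX) !mulgA.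
  by rewrite (hc x xX).
have lyx : lt y x.
  by case/orP: (hall x xts) => // /eqP eyx; rewrite eyx eqxx in nyx.
exists [:: y, x & xs'], [:: 1%N, e & ns'], l; split; split => //.
- by rewrite /= sz.
- by rewrite /= yX.
- by rewrite /= lyx.
- move=> w; rewrite in_cons => /orP[/eqP->|/xsub wts]; first by rewrite mem_head.
  by rewrite in_cons wts orbT.
- by rewrite /= lyz.
- by rewrite /= (m2 y yX nyz) er.
- by move: nsum => /= nsum; clear -nsum; lia.
by rewrite /prod_pows /prodl /= !mulgA.
Qed.

Theorem mainTheorem2 (G : groupType) (X : seq G) (m : nat) (lt : rel G) (z : G) :
  uniq X ->
  is_conj_class X ->
  generates X ->
  (forall x, x \in X -> conj_action_order X x m) ->
  strict_total_order_on X lt ->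
  z \in X -> (forall x, x \in X -> x != z -> lt x z) ->
  forall (n : nat) (g : G),
    (exists2 ys : seq G, (size ys = n)%N /\ all (mem X) ys & g = prodl ys) ->
    exists (xs : seq G) (ns : seq nat) (l : nat),
      [/\ size xs = size ns, all (mem X) xs & sorted lt (rcons xs z)] /\
      [/\
          all (fun k => (1 <= k <= m - 1)%N) ns,
          (sumn ns + l = n)%N &
          g = prod_pows xs ns * z ^+ l].
Proof.
move=> _ hcc gen hm ho zX zmax n g [ys [sz ysX] ->].
have hc := central_pow gen hm.
have hpow : forall x, x \in X -> z ^+ m = x ^+ m by move=> x xX; exact: (pow_eq hcc hc xX zX).
have m0 : (0 < m)%N by case: (hm z zX).
have [ts [sts tsX tsort] ets] := sort_ex hcc ho sz ysX.
have [xs [ns [l [[h1 h2 h3 _ _] [h4 h5 h6]]]]] := nf_ex ho zX zmax hc hpow m0 tsX tsort.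
exists xs, ns, l; split; split => //; first by rewrite h5.
by rewrite -ets.
Qed.
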